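(* Let $q$ be a prime power and let $n,k,r$ be integers with $4\le k\le\frac{n-1}{2}$, $n\le q$, and $2\le r\le k-2$; set $h=(k-1)+r$ and assume $h\le q-2$. Let $\alpha_1,\dots,\alpha_n\in\mathbb{F}_q$ be pairwise distinct and let $C_{h,k}$ be the linear code generated by the $k\times n$ matrix whose rows are $(\alpha_1^{e},\dots,\alpha_n^{e})$ for $e=0,1,\dots,k-2$ and $e=h$. If $C_{h,k}$ is MDS, then $C_{h,k}$ is a non-GRS MDS code.
   Context: Convention: $0^0=1$. A linear code is MDS if its parameters $[n,k,d]$ satisfy $d=n-k+1$. For pairwise distinct $a_1,\dots,a_n\in\mathbb{F}_q$ and $w\in(\mathbb{F}_q^* )^n$, $GRS(n,k,\{a_i\},w)=\{(w_1f(a_1),\dots,w_nf(a_n)) : f\in\mathbb{F}_q[x],\ \deg f\le k-1\}$. Two codes are (monomially) equivalent if one is obtained from the other by permuting coordinates and scaling coordinates by nonzero scalars. A non-GRS MDS code is an MDS code not equivalent to any GRS code. *)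

(* Defs.v *)
From HB Require Import structures.
From mathcomp Require Import all_boot all_order all_algebra all_fingroup.
Set Implicit Arguments. Unset Strict Implicit. Unset Printing Implicit Defensive.
Import GRing.Theory.
Local Open Scope ring_scope.

Section Codes.
Variable F : finFieldType.

Definition code (n : nat) := 'rV[F]_n -> Prop.

Definition gen_code (m n : nat) (G : 'M[F]_(m, n)) : code n :=
  fun v => (v <= G)%MS.

Definition wt (n : nat) (v : 'rV[F]_n) : nat := #|[set i : 'I_n | v 0 i != 0]|.

(* Minimum distance of the code generated by G (minimum weight of a nonzero
   codeword; n.+1 if the code is zero). *)
Definition mindist (m n : nat) (G : 'M[F]_(m, n)) : nat :=
  \big[minn/n.+1]_(v : 'rV[F]_n | (v <= G)%MS && (v != 0)) wt v.

Definition is_MDS (m n : nat) (G : 'M[F]_(m, n)) : Prop :=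
  (0 < \rank G)%N /\ mindist G = (n - \rank G + 1)%N.

Definition GRS (n k : nat) (a w : 'I_n -> F) : code n :=
  fun v => exists f : {poly F}, (size f <= k)%N /\ v = \row_j (w j * f.[a j]).

Definition mon_equiv (n : nat) (C1 C2 : code n) : Prop :=
  exists (s : 'S_n) (u : 'I_n -> F), (forall i, u i != 0) /\
    forall v, C1 v <-> C2 (\row_i (u i * v 0 (s i))).

Definition is_GRS_equiv (n : nat) (C : code n) : Prop :=
  exists (k : nat) (a w : 'I_n -> F), injective a /\ (forall i, w i != 0) /\
    mon_equiv C (GRS k a w).

Definition Chk_gen (n k h : nat) (alpha : 'I_n -> F) : 'M[F]_(k, n) :=
  \matrix_(i < k, j < n) alpha j ^+ (if (i < k.-1)%N then (i : nat) else h).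

End Codes.

(* Main.v *)
Require Import Defs.
From HB Require Import structures.
From mathcomp Require Import all_boot all_order all_algebra all_fingroup.
From mathcomp Require Import zify.
Set Implicit Arguments. Unset Strict Implicit. Unset Printing Implicit Defensive.
Import GRing.Theory.

Local Open Scope ring_scope.

Lemma vdm_free (F : fieldType) m n (c b : 'I_n -> F) :
  (m <= n)%N -> (forall i, c i != 0) -> injective b ->
  row_free (\matrix_(j < m, i < n) (c i * b i ^+ j)).
Proof.
move=> mn cnz binj.
case: m mn => [|m'] mn; first by rewrite /row_free -leqn0 rank_leq_row.
set M := \matrix_(j < m'.+1, i < n) _.
have key : forall u : 'rV_m'.+1, u *m M = 0 -> u = 0.
  move=> u uM.
  set p := \poly_(j < m'.+1) u 0 (inord j).
  have rootp : forall i, p.[b i] = 0.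
    move=> i; have := congr1 (fun A : 'rV_n => A 0 i) uM; rewrite !mxE => H.
    have : c i * p.[b i] = 0.
      rewrite horner_poly mulr_sumr -[in RHS]H; apply: eq_bigr => j _.
      by rewrite /M mxE mulrCA inord_val.
    by move/eqP; rewrite mulf_eq0 (negbTE (cnz i)) /= => /eqP.
  have p0 : p = 0.
    apply/eqP; apply: contraT => pnz.
    have := @max_poly_roots _ p [seq b i | i <- enum 'I_n] pnz.
    rewrite map_inj_uniq ?enum_uniq // size_map size_enum_ord.
    have -> : all (root p) [seq b i | i <- enum 'I_n].
      by apply/allP => x /mapP [i _ ->]; apply/rootP.
    move=> /(_ isT isT) hl; have := size_poly m'.+1 (fun j => u 0 (inord j)).
    rewrite -/p => h; have := leq_ltn_trans (leq_trans h mn) hl; by rewrite ltnn.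
  apply/rowP => j; rewrite mxE.
  by have := congr1 (fun q : {poly F} => q`_j) p0; rewrite coef_poly ltn_ord coef0 inord_val.
rewrite -kermx_eq0; apply/eqP/row_matrixP => r; rewrite row0.
by apply: key; apply/sub_kermxP; rewrite row_sub.
Qed.

Lemma poly_in_span (F : fieldType) n N (a v : 'I_n -> F) (g : {poly F}) :
  (size g <= N)%N ->
  (\row_i (v i * g.[a i])%R <= \matrix_(j < N, i < n) (v i * a i ^+ j)%R)%MS.
Proof.
move=> sg.
have -> : \row_i (v i * g.[a i]) = (\row_(j < N) g`_j) *m \matrix_(j < N, i < n) (v i * a i ^+ j).
  apply/rowP => i; rewrite !mxE (horner_coef_wide _ sg) mulr_sumr.
  by apply: eq_bigr => j _; rewrite !mxE mulrCA.
exact: submxMl.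
Qed.

Local Close Scope ring_scope.

Theorem theorem4p4 (F : finFieldType) (n k r : nat) (alpha : 'I_n -> F) :
  (4 <= k)%N -> (2 * k <= n - 1)%N -> (n <= #|F|)%N ->
  (2 <= r)%N -> (r <= k - 2)%N -> ((k - 1) + r <= #|F| - 2)%N ->
  injective alpha ->
  is_MDS (Chk_gen k ((k - 1) + r) alpha) ->
  is_MDS (Chk_gen k ((k - 1) + r) alpha) /\
  ~ is_GRS_equiv (gen_code (Chk_gen k ((k - 1) + r) alpha)).
Proof.
Local Open Scope ring_scope.
move=> hk hn _ hr1 hr2 _ ainj MDS; split=> //.
set h := (k - 1 + r)%N.
set G := Chk_gen k h alpha.
case=> k' [a [w [ainj' [wnz [s [u [unz equiv]]]]]]].
have mono : forall e, (e <= k - 2 \/ e = h)%N -> (\row_i (alpha i ^+ e)%R <= G)%MS.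
  move=> e he.
  have [e1 ->] : exists i : 'I_k, \row_i (alpha i ^+ e)%R = row i G.
    case: he => [he | ->].
    - have ek : (e < k)%N by lia.
      exists (Ordinal ek); apply/rowP => j; rewrite !mxE /=.
      by rewrite ifT //; lia.
    - have ek : (k.-1 < k)%N by lia.
      by exists (Ordinal ek); apply/rowP => j; rewrite !mxE /= ltnn.
  exact: row_sub.
have toGRS : forall v : 'rV_n, (v <= G)%MS -> exists f : {poly F}, (size f <= k')%N /\
    forall i, (u i * v 0 (s i) = w i * f.[a i])%R.
  move=> v /(equiv v).1 [f [sf ev]]; exists f; split=> // i.
  by have := congr1 (fun x : 'rV_n => x 0 i) ev; rewrite !mxE.
have kk' : (k < k')%N.
  set M1 := \matrix_(e < (2*k), i < n) (u i ^+ 2 * alpha (s i) ^+ e)%R.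
  have fr : row_free M1.
    apply: vdm_free; [lia | move=> i; rewrite expf_neq0 // | exact: inj_comp ainj (@perm_inj _ s)].
  have sub : (M1 <= \matrix_(j < (k'+k').-1, i < n) (w i ^+ 2 * a i ^+ j)%R)%MS.
    apply/row_subP => e.
    have [e1 [e2 [he1 [he2 ee]]]] : exists e1 e2, (e1 <= k-2 \/ e1 = h)%N /\
        (e2 <= k-2 \/ e2 = h)%N /\ (e:nat) = (e1 + e2)%N.
      have := ltn_ord e.
      case: (leqP (e:nat) (2*k-4)) => le lt.
      - exists (minn e (k-2)), (e - minn e (k-2))%N.
        split; [left; lia | split; [left; lia | lia]].
      - exists h, (e - h)%N; split; [by right | split; [left; lia | lia]].
    have [f1 [sf1 E1]] := toGRS _ (mono _ he1).
    have [f2 [sf2 E2]] := toGRS _ (mono _ he2).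
    have -> : row e M1 = \row_i (w i ^+ 2 * (f1 * f2).[a i])%R.
      apply/rowP => i; rewrite !mxE hornerM ee exprD.
      have := E1 i; have := E2 i; rewrite !mxE => Q2 Q1.
      by rewrite !expr2 mulrACA [RHS]mulrACA -Q1 -Q2.
    apply: poly_in_span.
    by apply: leq_trans (size_polyMleq f1 f2) _; rewrite -!subn1 leq_sub2r // leq_add.
  have := mxrankS sub; rewrite (eqP fr).
  have := rank_leq_row (\matrix_(j < (k'+k').-1, i < n) (w i ^+ 2 * a i ^+ j)%R).
  lia.
set M2 := \matrix_(j < k.+1, m < n)
   (w ((s^-1)%g m) / u ((s^-1)%g m) * a ((s^-1)%g m) ^+ j)%R.
have fr : row_free M2.
  apply: vdm_free; [lia | move=> i; rewrite mulf_neq0 ?invr_eq0 // |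
    exact: inj_comp ainj' (@perm_inj _ (s^-1)%g)].
have sub : (M2 <= G)%MS.
  apply/row_subP => j; apply/(equiv _).2; exists 'X^j; split.
    rewrite size_polyXn; have := ltn_ord j; lia.
  apply/rowP => i; rewrite !mxE permK hornerXn mulrA [(u i * _)%R]mulrC divfK //.
have := mxrankS sub; rewrite (eqP fr); have := rank_leq_row G; lia.
Qed.
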